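(* For each $n$ let $r_\star=r_\star(n)$ be an integer maximising $q_n^r$ over $r$. Then: (i) if $r$ is an integer with $r=r_\star+c\sqrt n$ for some $c\in[-\sqrt{\log n},\sqrt{\log n}]$, then \[ q_n^r = \exp\!\left(-\frac{5\sqrt5\,c^2}{2}+o(1)\right) q_n^{r_\star}, \] where $o(1)\to 0$ as $n\to\infty$; (ii) the number of sets $A\in Q(P_n)$ with $\big||A|-r_\star\big|>\sqrt{n\log n}$ is \[ O\!\left(n\exp\!\left(-\frac{5\sqrt5}{2}\log n\right) q_n^{r_\star}\right)=o\big(q_n^{r_\star}\big). \]
   Context: $Q(P_n)$ is the family of subsets of $[n]=\{1,\dots,n\}$ containing no two consecutive integers, $Q^{(r)}(P_n)$ its members of size $r$, and $q_n^r=|Q^{(r)}(P_n)|$. *)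

(* Defs.v *)
From mathcomp Require Import all_boot.
From Stdlib Require Import Reals.

Set Implicit Arguments. Unset Strict Implicit. Unset Printing Implicit Defensive.

(* The path P_n on [n] = {1,...,n} is encoded on 'I_n = {0,...,n-1} via
   i |-> i+1; this shift preserves the "two consecutive integers" relation. *)

Definition Qset (n : nat) : {set {set 'I_n}} :=
  [set A : {set 'I_n} | [forall i : 'I_n, forall j : 'I_n,
     ((i \in A) && (j \in A)) ==> (nat_of_ord j != (nat_of_ord i).+1)]].

Definition Qrset (n r : nat) : {set {set 'I_n}} := [set A in Qset n | #|A| == r].
Definition q (n r : nat) : nat := #|Qrset n r|.

Definition far_count (n rs : nat) (t : R) : nat :=
  #|[set A in Qset n | if Rlt_dec t (Rabs (INR #|A| - INR rs)) then true else false]|.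

Definition qZ (n : nat) (r : BinNums.Z) : nat :=
  if BinInt.Z.ltb r BinNums.Z0 then 0%N else q n (BinInt.Z.to_nat r).

(* Main.v *)
Require Import Defs.
From mathcomp Require Import all_boot zify.
From Stdlib Require Import Reals Lra Psatz ZArith.
Delimit Scope nat_scope with N.

Section AnaSec.
Local Open Scope R_scope.

Lemma Rabs_le_inv a b : Rabs a <= b -> - b <= a <= b.
Proof. move=> H; have := Rle_abs a; have := Rle_abs (- a); rewrite Rabs_Ropp; lra. Qed.

Lemma ln_le_sub1 x : 0 < x -> ln x <= x - 1.
Proof. move=> Hx; have := exp_ineq1_le (ln x); rewrite exp_ln //; lra. Qed.

Lemma ln1p_bound u : Rabs u <= 1/2 -> Rabs (ln (1 + u) - u) <= 2 * u ^ 2.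
Proof.
move=> Hu; have [Hu1 Hu2] := Rabs_le_inv _ _ Hu.
have Hp : 0 < 1 + u by lra.
have Hup := ln_le_sub1 _ Hp.
have Hlo : ln (1 + u) >= u / (1 + u).
  have Hi : 0 < / (1 + u) by apply: Rinv_0_lt_compat.
  have := ln_le_sub1 _ Hi; rewrite ln_Rinv //.
  have -> : / (1 + u) - 1 = - (u / (1 + u)) by field; lra.
  lra.
have Hq : u / (1 + u) >= u - 2 * u ^ 2.
  have E : u / (1 + u) - (u - 2 * u ^ 2) = u ^ 2 * (1 + 2 * u) / (1 + u) by field; lra.
  have : 0 <= u ^ 2 * (1 + 2 * u) / (1 + u).
    apply: Rmult_le_pos; last by apply/Rlt_le/Rinv_0_lt_compat.
    apply: Rmult_le_pos; [apply: pow2_ge_0 | lra].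
  lra.
apply: Rabs_le; have := pow2_ge_0 u; lra.
Qed.

Lemma term_bound s n d : s * s = 5 -> 2.2 <= s <= 2.3 -> 10000 <= n -> Rabs d <= n / 100 ->
  Rabs (ln (((n - 2 * (n * ((5 - s) / 10) + d) + 1) * (n - 2 * (n * ((5 - s) / 10) + d))) /
             ((n * ((5 - s) / 10) + d + 1) * (n - (n * ((5 - s) / 10) + d) + 1))) + 5 * s * d / n)
   <= 1000 * (1 / n + d ^ 2 / n ^ 2).
Proof.
move=> Hs Hsb Hn Hd.
set jj := n * ((5 - s) / 10) + d.
set N := (n - 2 * jj + 1) * (n - 2 * jj).
set D := (jj + 1) * (n - jj + 1).
have [Hd1 Hd2] := Rabs_le_inv _ _ Hd.
have Hdd0 : 0 <= Rabs d by apply: Rabs_pos.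
have Hd2a : d ^ 2 = Rabs d ^ 2 by rewrite RPow_abs Rabs_pos_eq //; apply: pow2_ge_0.
have HD : D = n ^ 2 / 5 + n * s * d / 5 + n + 1 - d ^ 2.
  have E : D - (n ^ 2 / 5 + n * s * d / 5 + n + 1 - d ^ 2) = n ^ 2 * (5 - s * s) / 100
    by rewrite /D /jj; field.
  rewrite Hs in E; lra.
have HND : N - D = - s * n * d + 5 * d ^ 2 + n * s / 5 - n - 2 * d - 1.
  have E : N - D - (- s * n * d + 5 * d ^ 2 + n * s / 5 - n - 2 * d - 1) = n ^ 2 * (s * s - 5) / 20
    by rewrite /N /D /jj; field.
  rewrite Hs in E; lra.
have Hnd : n * Rabs d <= n ^ 2 / 100 by nra.
have Hn0 : 0 <= n by lra.
have Hnd2 : - (n * Rabs d) <= n * d <= n * Rabs d.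
  split; [have := Rmult_le_compat_l _ _ _ Hn0 (Rle_abs (- d)); rewrite Rabs_Ropp; lra
         | exact: Rmult_le_compat_l _ _ _ Hn0 (Rle_abs d)].
have Hdsq : d ^ 2 <= n ^ 2 / 10000 by nra.
have Hsnd : - (2.3 * (n * Rabs d)) <= s * n * d <= 2.3 * (n * Rabs d) by split; nra.
have HDpos : D >= n ^ 2 / 10 by nra.
have HDp : 0 < D by nra.
have Hnp : 0 < n by lra.
set E := (N - D) * n + 5 * s * d * D.
have HE : E = 10 * n * d ^ 2 + n ^ 2 * (s / 5 - 1) - 2 * n * d - n + 5 * s * n * d + 5 * s * d - 5 * s * d ^ 3.
  have E1 : E - (10 * n * d ^ 2 + n ^ 2 * (s / 5 - 1) - 2 * n * d - n + 5 * s * n * d + 5 * s * d - 5 * s * d ^ 3)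
     = (s * s - 5) * n * d ^ 2 by rewrite /E HND HD; field.
  rewrite Hs in E1; lra.
have F1 : 2.2 * n ^ 2 <= s * n ^ 2 <= 2.3 * n ^ 2 by split; nra.
have F4 : - (2.3 * (n / 100)) <= s * d <= 2.3 * (n / 100) by split; nra.
have Hnn : n <= n ^ 2 / 10000 by nra.
have Hd3 : Rabs d * d ^ 2 <= n * d ^ 2 / 100 by nra.
have F5 : - (2.3 * (n * d ^ 2 / 100)) <= s * d ^ 3 <= 2.3 * (n * d ^ 2 / 100).
  have : - (Rabs d * d ^ 2) <= d ^ 3 <= Rabs d * d ^ 2.
    have H2 : 0 <= d ^ 2 by apply: pow2_ge_0.
    have -> : d ^ 3 = d * d ^ 2 by ring.
    split; [have := Rmult_le_compat_r _ _ _ H2 (Rle_abs (- d)); rewrite Rabs_Ropp; lra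
           | exact: Rmult_le_compat_r _ _ _ H2 (Rle_abs d)].
  move=> [H1 H2]; split; nra.
have F6 : 0 <= n * d ^ 2 by have := pow2_ge_0 d; nra.
have HEb : Rabs E <= 11 * (n ^ 2 + n * d ^ 2) by apply: Rabs_le; rewrite HE; lra.
set W := 110 * (1 / n + d ^ 2 / n ^ 2).
have HW : 11 * (n ^ 2 + n * d ^ 2) <= W * (n * D).
  have E2 : W * (n * (n ^ 2 / 10)) = 11 * (n ^ 2 + n * d ^ 2) by rewrite /W; field; lra.
  have HW0 : 0 <= W.
    rewrite /W; apply: Rmult_le_pos; first lra.
    apply: Rplus_le_le_0_compat.
    - apply: Rlt_le; rewrite /Rdiv Rmult_1_l; exact: Rinv_0_lt_compat.
    - apply: Rmult_le_pos; [apply: pow2_ge_0 | apply: Rlt_le; apply: Rinv_0_lt_compat; apply: pow_lt; lra].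
  rewrite -E2; apply: Rmult_le_compat_l => //; nra.
set u := N / D - 1.
set v := - (5 * s * d / n).
have Huv : u - v = E / (n * D) by rewrite /u /v /E; field; lra.
have Huvb : Rabs (u - v) <= W.
  rewrite Huv; apply: (Rmult_le_reg_r (n * D)); first nra.
  have -> : Rabs (E / (n * D)) * (n * D) = Rabs E.
    rewrite /Rdiv Rabs_mult Rabs_inv (Rabs_pos_eq (n * D)); last nra. field; nra.
  lra.
set X := 1 / n + d ^ 2 / n ^ 2.
have HX0 : 0 <= X.
  rewrite /X; apply: Rplus_le_le_0_compat.
  - apply: Rlt_le; rewrite /Rdiv Rmult_1_l; exact: Rinv_0_lt_compat.
  - apply: Rmult_le_pos; [apply: pow2_ge_0 | apply: Rlt_le; apply: Rinv_0_lt_compat; apply: pow_lt; lra].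
have HWX : W = 110 * X by [].
have HXn : X * n ^ 2 = n + d ^ 2 by rewrite /X; field; lra.
have HXs : X <= 0.0002 by nra.
have Hd2X : d ^ 2 / n ^ 2 <= X.
  rewrite /X; have : 0 <= 1 / n by apply: Rlt_le; rewrite /Rdiv Rmult_1_l; exact: Rinv_0_lt_compat.
  lra.
have Hvn : v * n = - (5 * s * d) by rewrite /v; field; lra.
have Hvb : - 0.115 <= v <= 0.115 by split; nra.
have Hv2 : v ^ 2 = 125 * (d ^ 2 / n ^ 2).
  have -> : v ^ 2 = 25 * (s * s) * (d ^ 2 / n ^ 2) by rewrite /v; field; lra.
  rewrite Hs; ring.
have [Huv1 Huv2] := Rabs_le_inv _ _ Huvb.
have Hu : Rabs u <= 1 / 2 by apply: Rabs_le; lra.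
have Hu2 : u ^ 2 <= 255 * X by nra.
have Hln := ln1p_bound _ Hu.
have -> : N / D = 1 + u by rewrite /u; ring.
have -> : ln (1 + u) + 5 * s * d / n = (ln (1 + u) - u) + (u - v) by rewrite /v; ring.
apply: Rle_trans (Rabs_triang _ _) _.
rewrite -/X; lra.
Qed.

End AnaSec.

Set Implicit Arguments. Unset Strict Implicit. Unset Printing Implicit Defensive.

Lemma QsetP n (A : {set 'I_n}) :
  reflect (forall i j, i \in A -> j \in A -> val j != (val i).+1) (A \in Qset n).
Proof.
rewrite inE; apply: (iffP forallP).
- move=> H i j Hi Hj; move/forallP: (H i) => /(_ j) /implyP; apply; by rewrite Hi Hj.
- move=> H i; apply/forallP=> j; apply/implyP=> /andP [Hi Hj]; exact: H.
Qed.

Section Up.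
Variable n : nat.
Definition w : 'I_n -> 'I_n.+1 := widen_ord (leqnSn n).
Definition upS (B : {set 'I_n}) : {set 'I_n.+1} := w @: B.
Definition downS (A : {set 'I_n.+1}) : {set 'I_n} := [set i | w i \in A].
Lemma w_inj : injective w.
Proof. by move=> i j /(congr1 val) /= /val_inj. Qed.
Lemma downK (B : {set 'I_n}) : downS (upS B) = B.
Proof. by apply/setP=> i; rewrite inE mem_imset //; exact: w_inj. Qed.
Lemma up_val (B : {set 'I_n}) i : i \in upS B -> val i < n.
Proof. by case/imsetP=> b _ ->; rewrite /= ltn_ord. Qed.
Lemma up_nomax (B : {set 'I_n}) : ord_max \notin upS B.
Proof. by apply/negP=> /up_val; rewrite /= ltnn. Qed.
Lemma upK (A : {set 'I_n.+1}) : ord_max \notin A -> upS (downS A) = A.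
Proof.
move=> HA; apply/setP=> i; apply/imsetP/idP.
- by case=> b; rewrite inE => Hb ->.
- move=> Hi; have Hlt : val i < n.
    have := ltn_ord i; rewrite ltnS leq_eqVlt; case/orP=> // /eqP E.
    have Ei : i = ord_max by apply/val_inj.
    by move: HA; rewrite -Ei Hi.
  exists (Ordinal Hlt); first by rewrite inE; have -> : w (Ordinal Hlt) = i by apply/val_inj.
  by apply/val_inj.
Qed.
Lemma card_up (B : {set 'I_n}) : #|upS B| = #|B|.
Proof. by rewrite card_imset //; exact: w_inj. Qed.
Lemma Qset_up (B : {set 'I_n}) : (upS B \in Qset n.+1) = (B \in Qset n).
Proof.
apply/QsetP/QsetP.
- move=> H i j Hi Hj; apply: (H (w i) (w j)); by rewrite mem_imset //; exact: w_inj.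
- move=> H i j /imsetP [a Ha ->] /imsetP [b Hb ->]; exact: H.
Qed.
End Up.

Lemma Qset_sub n (A C : {set 'I_n}) : C \subset A -> A \in Qset n -> C \in Qset n.
Proof.
move=> /subsetP HS /QsetP H; apply/QsetP=> i j Hi Hj; apply: H; exact: HS.
Qed.

Lemma q_small n r : n <= 1 -> q n r = 'C(n, r).
Proof.
move=> Hn; rewrite /q /Qrset.
have -> : [set A in Qset n | #|A| == r] = [set A : {set 'I_n} | #|A| == r].
  apply/setP=> A.
  have HQ : A \in Qset n by apply/QsetP=> i j _ _ /=; have := ltn_ord i; have := ltn_ord j; lia.
  by move: HQ; rewrite !inE => ->.
by rewrite card_draws card_ord.
Qed.

Lemma q_0 n : q n 0 = 1.
Proof.
rewrite /q /Qrset.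
have -> : [set A in Qset n | #|A| == 0] = [set A : {set 'I_n} | #|A| == 0].
  apply/setP=> A; rewrite [in RHS]inE [in LHS]inE.
  case E: (#|A| == 0); rewrite ?andbT ?andbF //.
  apply/QsetP=> i j Hi; move: E; rewrite cards_eq0 => /eqP E; by rewrite E inE in Hi.
by rewrite card_draws bin0.
Qed.

Definition f2 n (B : {set 'I_n}) : {set 'I_n.+2} := ord_max |: upS (upS B).
Definition g2 n (A : {set 'I_n.+2}) : {set 'I_n} := downS (downS (A :\ ord_max)).

Lemma f2K n : cancel (@f2 n) (@g2 n).
Proof. by move=> B; rewrite /g2 /f2 setU1K ?up_nomax // !downK. Qed.

Definition Xm n : {set {set 'I_n.+1}} := [set A : {set 'I_n.+1} | (@ord_max n) \in A].

Lemma inQr n r (A : {set 'I_n}) : (A \in Qrset n r) = (A \in Qset n) && (#|A| == r).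
Proof. by rewrite /Qrset [in LHS]inE. Qed.
Lemma inXm n (A : {set 'I_n.+1}) : (A \in Xm n) = (ord_max \in A).
Proof. by rewrite inE. Qed.

Lemma q_rec n r : q n.+2 r.+1 = q n.+1 r.+1 + q n r.
Proof.
rewrite /q -(cardsID (Xm n.+1)) addnC.
congr addn.
- have -> : Qrset n.+2 r.+1 :\: Xm n.+1 = (@upS n.+1) @: Qrset n.+1 r.+1.
    apply/setP=> A; apply/idP/imsetP.
    + rewrite in_setD inXm inQr => /andP [HX /andP [HQ Hc]].
      have HA := upK HX.
      exists (downS A); last by rewrite HA.
      rewrite inQr -Qset_up HA HQ /=; by rewrite -card_up HA.
    + case=> B; rewrite inQr => /andP [HQ Hc] ->.
      by rewrite in_setD inXm up_nomax inQr Qset_up HQ card_up.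
  rewrite card_imset //; apply: imset_inj; exact: w_inj.
- have -> : Qrset n.+2 r.+1 :&: Xm n.+1 = (@f2 n) @: Qrset n r.
    apply/setP=> A; apply/idP/imsetP.
    + rewrite in_setI inXm inQr => /andP [/andP [HQ Hc] HX].
      have HX' : ord_max \notin A :\ ord_max by rewrite in_setD1 eqxx.
      have HA := upK HX'.
      have Hn : (ord_max : 'I_n.+1) \notin downS (A :\ ord_max).
        apply/negP; rewrite inE => Hm.
        move/QsetP: HQ => /(_ _ _ (subsetP (subD1set A ord_max) _ Hm) HX) /=; by rewrite eqxx.
      have HB := upK Hn.
      exists (g2 A).
      * rewrite inQr /g2.
        have -> : g2 A \in Qset n = (A :\ ord_max \in Qset n.+2) by rewrite /g2 -Qset_up HB -Qset_up HA.
        rewrite (Qset_sub (subD1set A ord_max) HQ) /=.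
        rewrite -card_up HB -card_up HA; move: Hc; rewrite (cardsD1 ord_max A) HX; by rewrite add1n eqSS.
      * rewrite /f2 /g2 HB HA setD1K //.
    + case=> B; rewrite inQr => /andP [HQ Hc] ->.
      rewrite in_setI inXm inQr /f2 setU11 andbT cardsU1 up_nomax !card_up (eqP Hc) eqxx andbT.
      apply/QsetP=> i j; rewrite !in_setU1 => /orP [/eqP -> | Hi] /orP [/eqP -> | Hj] /=.
      * by rewrite neq_ltn ltnSn.
      * have := ltn_ord j; rewrite neq_ltn; by move=> ->.
      * case/imsetP: Hi => b Hb -> /=; have := up_val Hb; move=> /= Hv; lia.
      * have : upS (upS B) \in Qset n.+2 by rewrite !Qset_up.
        move/QsetP; exact.
  rewrite card_imset //; exact: can_inj (@f2K n).
Qed.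

Lemma q_binom n r : q n r = 'C(n.+1 - r, r).
Proof.
elim: n {-2}n (leqnn n) r => [|N IH] n Hn r.
- have -> : n = 0 by lia.
  rewrite q_small //; case: r => [|r]; first by [].
  by rewrite subSS sub0n.
- case: r => [|r]; first by rewrite q_0 bin0.
  case: n Hn => [|[|n]] Hn.
  + by rewrite q_small // subSS sub0n.
  + rewrite q_small //; case: r => [|r]; first by [].
    by rewrite !bin_small //; lia.
  + rewrite q_rec !IH; try lia.
    case: (leqP r n.+1) => Hr.
    * rewrite !subSS (subSn Hr) binS //.
    * rewrite !subSS !bin_small //; lia.
Qed.

Open Scope R_scope.

Definition s5 := sqrt 5.
Definition x0 := (5 - s5) / 10.
Definition kap := 5 * s5.
Definition dd n j := INR j - INR n * x0.
Definition Phi n j := ln (INR (q n j)) + kap * dd n j ^ 2 / (2 * INR n).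

Lemma s5sq : s5 * s5 = 5.
Proof. rewrite /s5 sqrt_sqrt //; lra. Qed.
Lemma s5b : 2.2 <= s5 <= 2.3.
Proof.
have H0 : 0 <= s5 by apply: sqrt_pos.
have := s5sq; split; nra.
Qed.

Lemma ND_id nn jj :
  (nn - 2 * jj + 1) * (nn - 2 * jj) - (jj + 1) * (nn - jj + 1) =
  - s5 * nn * (jj - nn * x0) + 5 * (jj - nn * x0) ^ 2 + nn * s5 / 5 - nn - 2 * (jj - nn * x0) - 1.
Proof.
have E : (nn - 2 * jj + 1) * (nn - 2 * jj) - (jj + 1) * (nn - jj + 1) -
  (- s5 * nn * (jj - nn * x0) + 5 * (jj - nn * x0) ^ 2 + nn * s5 / 5 - nn - 2 * (jj - nn * x0) - 1)
  = nn ^ 2 * (s5 * s5 - 5) / 20 by rewrite /x0; field.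
rewrite s5sq in E; lra.
Qed.

Lemma ND_pos nn jj : 1 <= nn -> 0 <= jj -> jj - nn * x0 <= -1 ->
  (jj + 1) * (nn - jj + 1) < (nn - 2 * jj + 1) * (nn - 2 * jj).
Proof.
move=> H1 H2 H3; have E := ND_id nn jj; have Hs := s5b; set d := jj - nn * x0 in E H3.
have Hsn : 0 <= s5 * nn by nra.
have : 0 <= s5 * nn * (- d - 1) by apply: Rmult_le_pos; lra.
have : 0 <= (- d - 1) * (- d) by apply: Rmult_le_pos; lra.
nra.
Qed.

Lemma ND_neg nn jj : 1 <= nn -> 0 <= jj - nn * x0 -> 2 * jj <= nn ->
  (nn - 2 * jj + 1) * (nn - 2 * jj) < (jj + 1) * (nn - jj + 1).
Proof.
move=> H1 H2 H3; have E := ND_id nn jj; have Hs := s5b.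
have Hx : nn * x0 = nn / 2 - nn * s5 / 10 by rewrite /x0; field.
have H3' : 2 * (jj - nn * x0) <= nn * s5 / 5 by lra.
set d := jj - nn * x0 in E H2 H3'.
have H4 : 0 <= s5 * nn - 5 * d by nra.
have : 0 <= d * (s5 * nn - 5 * d) by apply: Rmult_le_pos; lra.
nra.
Qed.

Lemma q_ratio (n j : nat) : (2 * j <= n)%nat ->
  (q n j.+1 * (j.+1 * (n - j).+1) = q n j * ((n - 2 * j).+1 * (n - 2 * j)))%nat.
Proof.
move=> H; rewrite !q_binom subSS.
have Hm : (n.+1 - j = (n - j).+1)%nat by rewrite subSn //; lia.
have Hm2 : (n - 2 * j = (n - j) - j)%nat by lia.
rewrite Hm Hm2; set m := (n - j)%nat.
have Hjm : (j <= m)%nat by rewrite /m; lia.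
have H1 := mul_bin_left m j.
have H2 := mul_bin_down m.+1 j.
rewrite /= in H2.
have Hm3 : (m.+1 - j = (m - j).+1)%nat by rewrite subSn.
rewrite Hm3 in H2.
have -> : ('C(m, j.+1) * (j.+1 * m.+1) = m.+1 * (j.+1 * 'C(m, j.+1)))%nat by lia.
rewrite H1 -mulnCA H2; lia.
Qed.

Lemma q_pos (n j : nat) : (2 * j <= n.+1)%nat -> (0 < q n j)%nat.
Proof. move=> H; rewrite q_binom bin_gt0; lia. Qed.

Lemma q_zero (n j : nat) : (n.+1 < 2 * j)%nat -> q n j = 0%nat.
Proof. move=> H; rewrite q_binom bin_small //; lia. Qed.

Lemma q_ratioR (n j : nat) : (2 * j <= n)%nat ->
  INR (q n j.+1) * ((INR j + 1) * (INR n - INR j + 1)) =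
  INR (q n j) * ((INR n - 2 * INR j + 1) * (INR n - 2 * INR j)).
Proof.
move=> H; have E := f_equal INR (q_ratio H).
rewrite -!multE !mult_INR in E.
have Hj : (j <= n)%nat by lia.
rewrite !S_INR -!minusE !minus_INR in E; try (apply/leP; lia).
rewrite mult_INR /= in E. lra.
Qed.

Lemma x0b : 0.27 <= x0 <= 0.28.
Proof. have := s5b; rewrite /x0; lra. Qed.

Lemma kapb : 11 <= kap <= 11.5.
Proof. have := s5b; rewrite /kap; lra. Qed.

Lemma dd_S n j : dd n j.+1 = dd n j + 1.
Proof. rewrite /dd S_INR; ring. Qed.

Lemma INR_j n j : INR j = INR n * ((5 - s5) / 10) + dd n j.
Proof. rewrite /dd /x0; ring. Qed.

Lemma range_facts n j : 10000 <= INR n -> Rabs (dd n j) <= INR n / 100 + 2 ->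
  (2 * j + 1 <= n)%nat.
Proof.
move=> Hn Hd; have [H1 H2] := Rabs_le_inv _ _ Hd; have Hx := x0b.
rewrite /dd in H1 H2.
apply/leP; apply: INR_le; rewrite plus_INR mult_INR /=; nra.
Qed.

Lemma step n j : 10000 <= INR n -> Rabs (dd n j) <= INR n / 100 ->
  Rabs (Phi n j.+1 - Phi n j) <= kap / (2 * INR n) + 1000 * (1 / INR n + dd n j ^ 2 / INR n ^ 2).
Proof.
move=> Hn Hd.
have Hr : (2 * j + 1 <= n)%nat by apply: range_facts => //; lra.
have Q0 := q_pos (n := n) (j := j) ltac:(lia).
have Q1 := q_pos (n := n) (j := j.+1) ltac:(lia).
have R := q_ratioR (n := n) (j := j) ltac:(lia).
have Q0r : 0 < INR (q n j) by apply: lt_0_INR; apply/ltP.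
have Q1r : 0 < INR (q n j.+1) by apply: lt_0_INR; apply/ltP.
have Hj : (2 * INR j + 1 <= INR n).
  have := le_INR _ _ (elimT leP Hr); rewrite -plusE -multE plus_INR mult_INR /=; lra.
have Hj0 := pos_INR j.
set N := (INR n - 2 * INR j + 1) * (INR n - 2 * INR j) in R.
set D := (INR j + 1) * (INR n - INR j + 1) in R.
have HD : 0 < D by rewrite /D; nra.
have HN : 0 < N.
  have : 0 < INR (q n j) * N by rewrite -R; nra.
  move=> H; nra.
have Hq : INR (q n j.+1) = INR (q n j) * (N / D).
  apply: (Rmult_eq_reg_r D); last lra. rewrite R; field; lra.
have Hl : ln (INR (q n j.+1)) = ln (INR (q n j)) + ln (N / D).
  rewrite Hq ln_mult //; apply: Rdiv_lt_0_compat => //.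
have -> : Phi n j.+1 - Phi n j = (ln (N / D) + 5 * s5 * dd n j / INR n) + kap / (2 * INR n).
  rewrite /Phi Hl dd_S /kap; field; lra.
apply: Rle_trans (Rabs_triang _ _) _.
rewrite (Rabs_pos_eq (kap / (2 * INR n))); last first.
  have := kapb; move=> Hk; apply: Rlt_le; apply: Rdiv_lt_0_compat; lra.
have TB := term_bound s5 (INR n) (dd n j) s5sq s5b Hn Hd.
rewrite /N /D (INR_j n j); lra.
Qed.

Lemma Phi_lip n a k M : 10000 <= INR n -> M <= INR n / 100 ->
  (forall i, (i < k)%nat -> Rabs (dd n (a + i)) <= M) ->
  Rabs (Phi n (a + k) - Phi n a) <= INR k * (kap / (2 * INR n) + 1000 * (1 / INR n + M ^ 2 / INR n ^ 2)).
Proof.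
move=> Hn HM; elim: k => [|k IH] H.
- rewrite addn0 Rminus_diag Rabs_R0 /=; lra.
- have IH' := IH (fun i Hi => H i (ltn_trans Hi (ltnSn k))).
  have Hk := H k (ltnSn k).
  have Hs := step (n := n) (j := (a + k)%nat) Hn (Rle_trans _ _ _ Hk HM).
  have HM0 : 0 <= M by have := Rabs_pos (dd n (a + k)); lra.
  have Hsq : dd n (a + k) ^ 2 <= M ^ 2 by apply: pow_maj_Rabs.
  have Hinv : 0 < / INR n ^ 2 by apply: Rinv_0_lt_compat; apply: pow_lt; lra.
  have Hsq' : dd n (a + k) ^ 2 / INR n ^ 2 <= M ^ 2 / INR n ^ 2 by rewrite /Rdiv; nra.
  rewrite addnS.
  have -> : Phi n (a + k).+1 - Phi n a = (Phi n (a + k).+1 - Phi n (a + k)) + (Phi n (a + k) - Phi n a) by ring.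
  apply: Rle_trans (Rabs_triang _ _) _.
  rewrite S_INR; lra.
Qed.

Lemma INR_le_nat (a b : nat) : INR a <= INR b -> (a <= b)%nat.
Proof. by move=> H; apply/leP; apply: INR_le. Qed.
Lemma nat_le_INR (a b : nat) : (a <= b)%nat -> INR a <= INR b.
Proof. by move=> H; apply: le_INR; apply/leP. Qed.

Lemma qstar_ge1 n rs : (forall r, (q n r <= q n rs)%nat) -> 1 <= INR (q n rs).
Proof. move=> H; have := H 0%nat; rewrite q_0 => /nat_le_INR; rewrite /=; lra. Qed.

Lemma loc n rs : 1 <= INR n -> (forall r, (q n r <= q n rs)%nat) -> Rabs (dd n rs) < 1.
Proof.
move=> Hn H; have Q1 := qstar_ge1 H; have Hx := x0b.
apply: Rabs_def1.
- apply: Rnot_le_lt => Hd; rewrite /dd in Hd.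
  case: rs H Q1 Hd => [|j] H Q1 Hd.
    simpl in Hd; nra.
  rewrite S_INR in Hd.
  case: (leqP (2 * j) n) => Hr.
  + have R := q_ratioR Hr.
    have Hr' := nat_le_INR Hr; rewrite -multE mult_INR /= in Hr'.
    have := ND_neg Hn (ltac:(lra) : 0 <= INR j - INR n * x0) Hr'.
    have HD : 0 < (INR j + 1) * (INR n - INR j + 1) by have := pos_INR j; nra.
    have HN : 0 <= (INR n - 2 * INR j + 1) * (INR n - 2 * INR j) by nra.
    have := nat_le_INR (H j).
    have := pos_INR (q n j).
    nra.
  + rewrite q_zero /= in Q1; [lra | lia].
- apply: Rnot_le_lt => Hd; rewrite /dd in Hd.
  have Hr : (2 * rs <= n)%nat.
    have : INR n * x0 <= 0.28 * INR n by nra.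
    move=> Hh; apply: INR_le_nat; rewrite -multE mult_INR /=; lra.
  have R := q_ratioR Hr.
  have Hd' : INR rs - INR n * x0 <= -1 by lra.
  have := ND_pos Hn (pos_INR rs) Hd'.
  have HD : 0 < (INR rs + 1) * (INR n - INR rs + 1) by have := pos_INR rs; nra.
  have := nat_le_INR (H rs.+1).
  nra.
Qed.

Lemma mono_up n rs j : 1 <= INR n -> (forall r, (q n r <= q n rs)%nat) ->
  (rs <= j)%nat -> (q n j.+1 <= q n j)%nat.
Proof.
move=> Hn H Hj; have Hx := x0b.
have Hl := loc Hn H; have [Hl1 Hl2] := Rabs_le_inv _ _ (Rlt_le _ _ Hl).
rewrite leq_eqVlt in Hj; case/orP: Hj => [/eqP <- | Hj]; first exact: H.
case: (leqP (2 * j) n) => Hr.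
- have R := q_ratioR Hr.
  have Hr' := nat_le_INR Hr; rewrite -multE mult_INR /= in Hr'.
  have Hjr := nat_le_INR Hj; rewrite S_INR in Hjr.
  rewrite /dd in Hl1.
  have := ND_neg Hn (ltac:(lra) : 0 <= INR j - INR n * x0) Hr'.
  have HD : 0 < (INR j + 1) * (INR n - INR j + 1) by have := pos_INR j; nra.
  have := pos_INR (q n j).
  move=> H1 H2; apply: INR_le_nat; nra.
- by rewrite q_zero //; lia.
Qed.

Lemma mono_down n rs j : 1 <= INR n -> (forall r, (q n r <= q n rs)%nat) ->
  (j < rs)%nat -> (q n j <= q n j.+1)%nat.
Proof.
move=> Hn H Hj; have Hx := x0b.
have Hl := loc Hn H; have [Hl1 Hl2] := Rabs_le_inv _ _ (Rlt_le _ _ Hl).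
rewrite leq_eqVlt in Hj; case/orP: Hj => [/eqP -> | Hj]; first exact: H.
have Hjr := nat_le_INR Hj; rewrite !S_INR in Hjr.
rewrite /dd in Hl2.
have Hr : (2 * j <= n)%nat.
  have : INR n * x0 <= 0.28 * INR n by nra.
  move=> Hh; apply: INR_le_nat; rewrite -multE mult_INR /=; have := pos_INR j; lra.
have R := q_ratioR Hr.
have Hd' : INR j - INR n * x0 <= -1 by lra.
have := ND_pos Hn (pos_INR j) Hd'.
have HD : 0 < (INR j + 1) * (INR n - INR j + 1) by have := pos_INR j; nra.
have := pos_INR (q n j).
move=> H1 H2; apply: INR_le_nat; nra.
Qed.

Lemma mono_up_iter n rs a i : 1 <= INR n -> (forall r, (q n r <= q n rs)%nat) ->
  (rs <= a)%nat -> (q n (a + i) <= q n a)%nat.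
Proof.
move=> Hn H Ha; elim: i => [|i IH]; first by rewrite addn0.
rewrite addnS; apply: leq_trans IH; apply: mono_up Hn H _; lia.
Qed.

Lemma mono_down_iter n rs b i : 1 <= INR n -> (forall r, (q n r <= q n rs)%nat) ->
  (b <= rs)%nat -> (q n (b - i) <= q n b)%nat.
Proof.
move=> Hn H Hb; elim: i => [|i IH]; first by rewrite subn0.
apply: leq_trans IH.
case: (ltnP i b) => Hi.
- have -> : (b - i = (b - i.+1).+1)%nat by lia.
  apply: mono_down Hn H _; lia.
- by rewrite (_ : (b - i.+1 = b - i)%nat) //; lia.
Qed.

Lemma fin_bound nn M k P e : 10000 <= nn -> 0 <= k -> k <= M ->
  Rabs P <= k * (kap / (2 * nn) + 1000 * (1 / nn + M ^ 2 / nn ^ 2)) ->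
  Rabs e <= kap * k / nn ->
  Rabs (P + e) <= 1020 * (M / nn) + 1000 * (M ^ 3 / nn ^ 2).
Proof.
move=> Hn Hk HkM HP He.
have Hk1 := kapb.
set A := kap / (2 * nn) + 1000 * (1 / nn + M ^ 2 / nn ^ 2) in HP *.
have HA : 0 <= A.
  rewrite /A; apply: Rplus_le_le_0_compat.
  - apply: Rlt_le; apply: Rdiv_lt_0_compat; lra.
  - apply: Rmult_le_pos; first lra.
    apply: Rplus_le_le_0_compat.
    + apply: Rlt_le; apply: Rdiv_lt_0_compat; lra.
    + apply: Rmult_le_pos; [apply: pow2_ge_0 | apply: Rlt_le; apply: Rinv_0_lt_compat; apply: pow_lt; lra].
have H1 : k * A <= M * A by nra.
have H2 : kap * k / nn <= kap * M / nn.
  rewrite /Rdiv; apply: Rmult_le_compat_r; first by apply: Rlt_le; apply: Rinv_0_lt_compat; lra.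
  nra.
have E : M * A + kap * M / nn = (kap * 3 / 2 + 1000) * (M / nn) + 1000 * (M ^ 3 / nn ^ 2)
  by rewrite /A; field; lra.
have HMn : 0 <= M / nn by rewrite /Rdiv; apply: Rmult_le_pos; [lra | apply: Rlt_le; apply: Rinv_0_lt_compat; lra].
have H3 : (kap * 3 / 2 + 1000) * (M / nn) <= 1020 * (M / nn) by nra.
apply: Rle_trans (Rabs_triang _ _) _.
lra.
Qed.

Lemma core_up n rs k M : 10000 <= INR n -> (forall r, (q n r <= q n rs)%nat) ->
  M <= INR n / 100 -> 1 + INR k <= M ->
  Rabs (ln (INR (q n (rs + k))) - ln (INR (q n rs)) + kap * INR k ^ 2 / (2 * INR n))
    <= 1020 * (M / INR n) + 1000 * (M ^ 3 / INR n ^ 2).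
Proof.
move=> Hn H HM HkM.
have Hl := loc (ltac:(lra) : 1 <= INR n) H; have [Hl1 Hl2] := Rabs_le_inv _ _ (Rlt_le _ _ Hl).
have HL := Phi_lip (n := n) (a := rs) (k := k) Hn HM.
have HL' : Rabs (Phi n (rs + k) - Phi n rs) <=
    INR k * (kap / (2 * INR n) + 1000 * (1 / INR n + M ^ 2 / INR n ^ 2)).
  apply: HL => i Hi.
  have Hi' := nat_le_INR (ltnW Hi).
  have -> : dd n (rs + i) = dd n rs + INR i by rewrite /dd -plusE plus_INR; ring.
  apply: Rabs_le; have := pos_INR i; lra.
have Hk0 := pos_INR k.
have -> : ln (INR (q n (rs + k))) - ln (INR (q n rs)) + kap * INR k ^ 2 / (2 * INR n)
   = (Phi n (rs + k) - Phi n rs) + (- (kap * INR k * dd n rs / INR n)).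
  rewrite /Phi (_ : dd n (rs + k) = dd n rs + INR k); last by rewrite /dd -plusE plus_INR; ring.
  field; lra.
apply: (@fin_bound (INR n) M (INR k)) => //; try lra.
rewrite Rabs_Ropp /Rdiv Rabs_mult Rabs_mult Rabs_mult Rabs_inv.
have := kapb => Hk.
rewrite (Rabs_pos_eq kap) ?(Rabs_pos_eq (INR k)) ?(Rabs_pos_eq (INR n)); try lra.
have Hin : 0 < / INR n by apply: Rinv_0_lt_compat; lra.
have Hp : 0 <= kap * INR k * / INR n by apply: Rmult_le_pos; [apply: Rmult_le_pos; lra | lra].
have : Rabs (dd n rs) <= 1 by lra.
move=> Ha; have := Rmult_le_compat_l _ _ _ Hp Ha.
lra.
Qed.

Lemma core_down n rs k M : 10000 <= INR n -> (forall r, (q n r <= q n rs)%nat) ->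
  M <= INR n / 100 -> 1 + INR k <= M -> (k <= rs)%nat ->
  Rabs (ln (INR (q n (rs - k))) - ln (INR (q n rs)) + kap * INR k ^ 2 / (2 * INR n))
    <= 1020 * (M / INR n) + 1000 * (M ^ 3 / INR n ^ 2).
Proof.
move=> Hn H HM HkM Hkr.
have Hl := loc (ltac:(lra) : 1 <= INR n) H; have [Hl1 Hl2] := Rabs_le_inv _ _ (Rlt_le _ _ Hl).
have HL := Phi_lip (n := n) (a := (rs - k)%nat) (k := k) Hn HM.
have Ek : (rs - k + k = rs)%nat by lia.
rewrite Ek in HL.
have Hdk : dd n (rs - k) = dd n rs - INR k by rewrite /dd -minusE minus_INR; [ring | apply/leP].
have HL' : Rabs (Phi n rs - Phi n (rs - k)) <=
    INR k * (kap / (2 * INR n) + 1000 * (1 / INR n + M ^ 2 / INR n ^ 2)).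
  apply: HL => i Hi.
  have Hi' := nat_le_INR (ltnW Hi).
  have -> : dd n (rs - k + i) = dd n rs - INR k + INR i by rewrite /dd -plusE plus_INR -minusE minus_INR; [ring | apply/leP].
  apply: Rabs_le; have := pos_INR i; lra.
have Hk0 := pos_INR k.
have -> : ln (INR (q n (rs - k))) - ln (INR (q n rs)) + kap * INR k ^ 2 / (2 * INR n)
   = (- (Phi n rs - Phi n (rs - k))) + (kap * INR k * dd n rs / INR n).
  rewrite /Phi Hdk.
  field; lra.
apply: (@fin_bound (INR n) M (INR k)) => //; try lra.
  by rewrite Rabs_Ropp.
rewrite /Rdiv Rabs_mult Rabs_mult Rabs_mult Rabs_inv.
have := kapb => Hk.
rewrite (Rabs_pos_eq kap) ?(Rabs_pos_eq (INR k)) ?(Rabs_pos_eq (INR n)); try lra.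
have Hin : 0 < / INR n by apply: Rinv_0_lt_compat; lra.
have Hp : 0 <= kap * INR k * / INR n by apply: Rmult_le_pos; [apply: Rmult_le_pos; lra | lra].
have : Rabs (dd n rs) <= 1 by lra.
move=> Ha; have := Rmult_le_compat_l _ _ _ Hp Ha.
lra.
Qed.

Definition Mf n := sqrt (INR n * ln (INR n)) + 3.

Lemma sq_le a b : 0 <= b -> a ^ 2 <= b ^ 2 -> a <= b.
Proof. move=> Hb H; apply: Rnot_lt_le => Hab; nra. Qed.

Lemma asym δ : 0 < δ -> δ <= 1 / 100 -> exists N : nat, forall n : nat, (N <= n)%nat ->
  10000 <= INR n /\ Mf n <= INR n / 100 /\ Mf n / INR n <= δ /\ Mf n ^ 3 / INR n ^ 2 <= δ.
Proof.
move=> Hd Hd1.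
set Y := 1 + 34 ^ 3 / δ ^ 2 + 34 / δ ^ 2 + 10000.
have Hd2 : 0 < δ ^ 2 by apply: pow_lt.
have HY1 : 34 ^ 3 <= δ ^ 2 * Y.
  have : 0 <= 34 / δ ^ 2 by apply: Rlt_le; apply: Rdiv_lt_0_compat; lra.
  have : δ ^ 2 * (34 ^ 3 / δ ^ 2) = 34 ^ 3 by field; lra.
  rewrite /Y; nra.
have HY2 : 34 <= δ ^ 2 * Y.
  have : 0 <= 34 ^ 3 / δ ^ 2 by apply: Rlt_le; apply: Rdiv_lt_0_compat; lra.
  have : δ ^ 2 * (34 / δ ^ 2) = 34 by field; lra.
  rewrite /Y; nra.
have HY0 : 10001 <= Y.
  have : 0 <= 34 ^ 3 / δ ^ 2 by apply: Rlt_le; apply: Rdiv_lt_0_compat; lra.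
  have : 0 <= 34 / δ ^ 2 by apply: Rlt_le; apply: Rdiv_lt_0_compat; lra.
  rewrite /Y; lra.
have [N HN] := INR_unbounded (Y ^ 8).
exists N => n Hn.
have Hnn : Y ^ 8 < INR n by have := nat_le_INR Hn; lra.
have HY8 : 0 < Y ^ 8 by apply: pow_lt; lra.
set nn := INR n in Hnn *.
have Hnp : 0 < nn by lra.
set a := sqrt nn. set b := sqrt a. set y := sqrt b.
have Ha : a * a = nn by rewrite /a sqrt_sqrt; lra.
have Ha0 : 0 <= a by apply: sqrt_pos.
have Hb : b * b = a by rewrite /b sqrt_sqrt.
have Hb0 : 0 <= b by apply: sqrt_pos.
have Hy : y * y = b by rewrite /y sqrt_sqrt.
have Hy0 : 0 <= y by apply: sqrt_pos.
have Hy8 : y ^ 8 = nn by rewrite -Ha -Hb -Hy; ring.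
have HyY : Y <= y.
  apply: Rnot_lt_le => Hlt.
  have := pow_incr y Y 8 (conj Hy0 (Rlt_le _ _ Hlt)); lra.
have Hy1 : 1 <= y by lra.
have Hy7 : y <= y ^ 7 by have := Rle_pow y 1 7 Hy1 ltac:(lia); rewrite pow_1.
have Hy5 : y <= y ^ 5 by have := Rle_pow y 1 5 Hy1 ltac:(lia); rewrite pow_1.
have Hy9 : 1 <= y ^ 9 by have := Rle_pow y 0 9 Hy1 ltac:(lia); rewrite pow_O.
have Hy8' : y <= y ^ 8 by have := Rle_pow y 1 8 Hy1 ltac:(lia); rewrite pow_1.
have Hn1 : 10000 <= nn by lra.
have HL : ln nn = 8 * ln y by rewrite -Hy8 ln_pow; [rewrite /=; ring | lra].
have Hly : 0 <= ln y <= y.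
  split.
  - rewrite -ln_1; apply: Rlt_le; apply: ln_increasing; lra.
  - have := ln_le_sub1 y ltac:(lra); lra.
set T := nn * ln nn.
have HT0 : 0 <= T by rewrite /T HL; nra.
have HT : T <= 8 * y ^ 9.
  rewrite /T HL -Hy8.
  have -> : 8 * y ^ 9 = y ^ 8 * (8 * y) by ring.
  apply: Rmult_le_compat_l; [apply: pow_le; lra | lra].
set t := sqrt T.
have Ht : t ^ 2 = T by rewrite /t /= Rmult_1_r sqrt_sqrt.
have Ht0 : 0 <= t by apply: sqrt_pos.
have HM : Mf n = t + 3 by [].
have HM0 : 0 <= t + 3 by lra.
have HM2 : (t + 3) ^ 2 <= 34 * y ^ 9 by nra.
have HA : t + 3 <= δ * nn.
  apply: sq_le; first nra.
  have -> : (δ * nn) ^ 2 = (δ ^ 2 * y ^ 7) * y ^ 9 by rewrite -Hy8; ring.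
  have : 34 <= δ ^ 2 * y ^ 7 by nra.
  move=> H34; apply: Rle_trans HM2 _; apply: Rmult_le_compat_r; [lra | lra].
have HB : (t + 3) ^ 3 <= δ * nn ^ 2.
  apply: sq_le; first by have := pow_lt nn 2 Hnp; nra.
  have -> : ((t + 3) ^ 3) ^ 2 = ((t + 3) ^ 2) ^ 3 by ring.
  have -> : (δ * nn ^ 2) ^ 2 = (δ ^ 2 * y ^ 5) * y ^ 27 by rewrite -Hy8; ring.
  have H1 := pow_incr _ _ 3 (conj (pow2_ge_0 (t + 3)) HM2).
  apply: Rle_trans H1 _.
  have -> : (34 * y ^ 9) ^ 3 = 34 ^ 3 * y ^ 27 by ring.
  have : 34 ^ 3 <= δ ^ 2 * y ^ 5 by nra.
  move=> H34; apply: Rmult_le_compat_r; [apply: pow_le; lra | lra].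
rewrite HM; split; first lra.
split; first nra.
split.
- apply: (Rmult_le_reg_r nn) => //; rewrite /Rdiv Rmult_assoc Rinv_l; lra.
- have Hn2 : 0 < nn ^ 2 by apply: pow_lt.
  apply: (Rmult_le_reg_r (nn ^ 2)) => //; rewrite /Rdiv Rmult_assoc Rinv_l; lra.
Qed.

Definition farc (rs : nat) (t : R) (r : nat) : bool :=
  if Rlt_dec t (Rabs (INR r - INR rs)) then true else false.

Lemma card_bigcup_le (T I : finType) (P : pred I) (F : I -> {set T}) :
  (#|\bigcup_(i | P i) F i| <= \sum_(i | P i) #|F i|)%nat.
Proof.
apply: (big_ind2 (fun (A : {set T}) m => #|A| <= m)%nat).
- by rewrite cards0.
- move=> A m B k HA HB; apply: leq_trans (leq_card_setU A B) _; exact: leq_add.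
- by [].
Qed.

Lemma far_bound n rs t Qm :
  (forall r, (r <= n)%nat -> farc rs t r -> (q n r <= Qm)%nat) ->
  (far_count n rs t <= n.+1 * Qm)%nat.
Proof.
move=> H.
have Hsub : [set A in Qset n | farc rs t #|A|] \subset \bigcup_(i : 'I_n.+1 | farc rs t i) Qrset n i.
  apply/subsetP=> A; rewrite inE => /andP [HQ Hc].
  have Hle : (#|A| < n.+1)%nat by rewrite ltnS; have := max_card A; rewrite card_ord.
  apply/bigcupP; exists (Ordinal Hle) => //.
  by rewrite inQr HQ /=.
rewrite /far_count.
have -> : [set A in Qset n | if Rlt_dec t (Rabs (INR #|A| - INR rs)) then true else false]
         = [set A in Qset n | farc rs t #|A|] by [].
apply: leq_trans (subset_leq_card Hsub) _.
apply: leq_trans (card_bigcup_le _ _) _.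
apply: leq_trans (_ : \sum_(i < n.+1 | farc rs t i) Qm <= _)%nat.
  apply: leq_sum => i Hi; rewrite -/(q n i); apply: H => //; rewrite -ltnS; exact: ltn_ord.
rewrite big_mkcond /=.
apply: leq_trans (_ : \sum_(i < n.+1) Qm <= _)%nat.
  by apply: leq_sum => i _; case: (farc rs t i).
by rewrite sum_nat_const card_ord.
Qed.

Lemma close n rs rn M : 10000 <= INR n -> (forall r, (q n r <= q n rs)%nat) ->
  M <= INR n / 100 -> 1 + Rabs (INR rn - INR rs) <= M ->
  Rabs (ln (INR (q n rn)) - ln (INR (q n rs)) + kap * (INR rn - INR rs) ^ 2 / (2 * INR n))
    <= 1020 * (M / INR n) + 1000 * (M ^ 3 / INR n ^ 2) /\ (0 < q n rn)%nat.
Proof.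
move=> Hn H HM Hk.
split.
- case: (leqP rs rn) => Hr.
  + have E : rn = (rs + (rn - rs))%nat by rewrite subnKC.
    have Ek : INR (rn - rs) = INR rn - INR rs by rewrite -minusE minus_INR //; apply/leP.
    rewrite {1}E -Ek; apply: core_up => //.
    rewrite Ek; have := Rle_abs (INR rn - INR rs); lra.
  + have E : rn = (rs - (rs - rn))%nat by rewrite subKn // ltnW.
    have Ek : INR (rs - rn) = INR rs - INR rn by rewrite -minusE minus_INR //; apply/leP; exact: ltnW.
    have -> : (INR rn - INR rs) ^ 2 = INR (rs - rn) ^ 2 by rewrite Ek; ring.
    rewrite {1}E; apply: core_down => //; last exact: leq_subr.
    rewrite Ek; have := Rle_abs (- (INR rn - INR rs)); rewrite Rabs_Ropp; lra.
- apply: q_pos.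
  have : (2 * rn + 1 <= n)%nat.
    apply: range_facts => //.
    have -> : dd n rn = dd n rs + (INR rn - INR rs) by rewrite /dd; ring.
    have := loc (ltac:(lra) : 1 <= INR n) H.
    move=> Hl; apply: Rle_trans (Rabs_triang _ _) _; lra.
  lia.
Qed.

Lemma ln_nn_pos n : 10000 <= INR n -> 0 <= ln (INR n).
Proof. move=> H; rewrite -ln_1; apply: Rlt_le; apply: ln_increasing; lra. Qed.

Lemma part1 (rstar : nat -> nat)
  (hmax : forall n r : nat, (q n r <= q n (rstar n))%nat) :
  (forall eps : R, (0 < eps)%R ->
     exists N : nat, forall (n : nat) (r : BinNums.Z), (N <= n)%nat ->
       forall c : R,
         (IZR r = INR (rstar n) + c * sqrt (INR n))%R ->
         (- sqrt (ln (INR n)) <= c <= sqrt (ln (INR n)))%R ->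
         exists e : R, (Rabs e <= eps)%R /\
           INR (qZ n r) =
             (exp (- (5 * sqrt 5 * c ^ 2) / 2 + e) * INR (q n (rstar n)))%R).
Proof.
move=> eps Heps.
set δ := Rmin (eps / 2020) (1 / 100).
have Hδ : 0 < δ by apply: Rmin_pos; lra.
have Hδ1 : δ <= 1 / 100 by apply: Rmin_r.
have Hδ2 : δ <= eps / 2020 by apply: Rmin_l.
have [N HN] := asym Hδ Hδ1.
exists N => n r Hn c Hr Hc.
have [H1 [H2 [H3 H4]]] := HN n Hn.
have H := hmax n.
set rs := rstar n in Hr H *.
set nn := INR n in H1 H2 H3 H4 Hr Hc *.
have HL0 : 0 <= ln nn by exact: ln_nn_pos.
have Hx := x0b.
have Hl := loc (ltac:(lra) : 1 <= nn) H.
have [Hl1 Hl2] := Rabs_le_inv _ _ (Rlt_le _ _ Hl).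
rewrite /dd -/rs -/nn in Hl1 Hl2.
set t := sqrt (nn * ln nn).
have HM : Mf n = t + 3 by [].
have Hsn0 : 0 <= sqrt nn by apply: sqrt_pos.
have Hsl0 : 0 <= sqrt (ln nn) by apply: sqrt_pos.
have Hkt : Rabs (c * sqrt nn) <= t.
  rewrite Rabs_mult (Rabs_pos_eq (sqrt nn)) // /t sqrt_mult; try lra.
  rewrite Rmult_comm; apply: Rmult_le_compat_l => //.
  apply: Rabs_le; lra.
have [Hk1 Hk2] := Rabs_le_inv _ _ Hkt.
have Hr0 : (0 < r)%Z.
  apply: lt_IZR; rewrite Hr.
  have : nn * x0 >= 0.27 * nn by nra.
  rewrite -/nn; lra.
set rn := Z.to_nat r.
have Hrn : INR rn = IZR r by rewrite INR_IZR_INZ Z2Nat.id //; lia.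
have HqZ : qZ n r = q n rn.
  rewrite /qZ; have -> : BinInt.Z.ltb r BinNums.Z0 = false by apply/Z.ltb_ge; lia.
  by [].
have Hdiff : INR rn - INR rs = c * sqrt nn by rewrite Hrn Hr; ring.
have [Hcl Hpos] := close (rn := rn) (M := Mf n) H1 H H2 ltac:(rewrite Hdiff HM; lra).
rewrite Hdiff in Hcl.
have Hsq : (c * sqrt nn) ^ 2 = c ^ 2 * nn.
  have -> : (c * sqrt nn) ^ 2 = c ^ 2 * (sqrt nn * sqrt nn) by ring.
  rewrite sqrt_sqrt //; lra.
rewrite Hsq in Hcl.
have Hq0 : 0 < INR (q n rn) by apply: lt_0_INR; apply/ltP.
have Hqs : 1 <= INR (q n rs) by exact: qstar_ge1.
exists (ln (INR (q n rn)) - ln (INR (q n rs)) + 5 * sqrt 5 * c ^ 2 / 2).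
split.
- have -> : ln (INR (q n rn)) - ln (INR (q n rs)) + 5 * sqrt 5 * c ^ 2 / 2 =
     ln (INR (q n rn)) - ln (INR (q n rs)) + kap * (c ^ 2 * nn) / (2 * nn)
     by rewrite /kap /s5; field; lra.
  rewrite -/nn in Hcl.
  lra.
- rewrite HqZ.
  have -> : - (5 * sqrt 5 * c ^ 2) / 2 + (ln (INR (q n rn)) - ln (INR (q n rs)) + 5 * sqrt 5 * c ^ 2 / 2)
     = ln (INR (q n rn)) + - ln (INR (q n rs)) by field.
  rewrite exp_plus exp_Ropp !exp_ln; try lra.
  field; lra.
Qed.

Lemma exp_le_mono x y : x <= y -> exp x <= exp y.
Proof.
move=> H; case: (Rle_lt_or_eq_dec _ _ H) => [Hl | ->]; last lra.
apply: Rlt_le; exact: exp_increasing.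
Qed.

Lemma bnd_of_ln a b X : 0 < a -> 0 < b -> ln a <= ln b + X -> a <= b * exp X.
Proof.
move=> Ha Hb H; have := exp_le_mono H.
rewrite exp_plus !exp_ln //.
Qed.

Lemma part2 (rstar : nat -> nat)
  (hmax : forall n r : nat, (q n r <= q n (rstar n))%nat) :
  exists N : nat, forall n : nat, (N <= n)%nat ->
     (INR (far_count n (rstar n) (sqrt (INR n * ln (INR n))))
        <= (4 * exp 1) * INR n * exp (- (5 * sqrt 5 / 2) * ln (INR n))
             * INR (q n (rstar n)))%R.
Proof.
have Hδ : 0 < 1 / 2020 by lra.
have [N HN] := asym Hδ ltac:(lra).
exists N => n Hn.
have [H1 [H2 [H3 H4]]] := HN n Hn.
have H := hmax n.
set rs := rstar n in H *.
set nn := INR n in H1 H2 H3 H4 *.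
have HL0 : 0 <= ln nn by exact: ln_nn_pos.
have Hx := x0b.
have Hl := loc (ltac:(lra) : 1 <= nn) H.
have [Hl1 Hl2] := Rabs_le_inv _ _ (Rlt_le _ _ Hl).
rewrite /dd -/rs -/nn in Hl1 Hl2.
set t := sqrt (nn * ln nn).
have HM : Mf n = t + 3 by [].
have Ht0 : 0 <= t by apply: sqrt_pos.
have Ht2 : t ^ 2 = nn * ln nn by rewrite /t /= Rmult_1_r sqrt_sqrt //; nra.
have [Ha1 Ha2] := archimed t.
set z := up t in Ha1 Ha2.
have Hz : (0 < z)%Z by apply: lt_IZR; lra.
set kb := Z.to_nat z.
have Hkb : INR kb = IZR z by rewrite INR_IZR_INZ Z2Nat.id //; lia.
have Hqs : 1 <= INR (q n rs) by exact: qstar_ge1.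
set B := INR (q n rs) * exp (- (kap / 2) * ln nn + 1).
have HB0 : 0 <= B by rewrite /B; apply: Rmult_le_pos; [lra | apply: Rlt_le; apply: exp_pos].
have Hkbt : t < INR kb <= t + 1 by lra.
have Hk := kapb.
have Hgen : forall rn, Rabs (INR rn - INR rs) = INR kb -> INR (q n rn) <= B.
  move=> rn Hrn.
  have [Hcl Hpos] := close (rn := rn) (M := Mf n) H1 H H2 ltac:(rewrite Hrn HM; lra).
  rewrite -/nn in Hcl.
  have Hsq : (INR rn - INR rs) ^ 2 = INR kb ^ 2 by rewrite -Hrn; have := Rsqr_abs (INR rn - INR rs); rewrite /Rsqr /=; lra.
  rewrite Hsq in Hcl.
  have [Hc1 Hc2] := Rabs_le_inv _ _ Hcl.
  have Hkk : t ^ 2 <= INR kb ^ 2 by apply: pow_incr; lra.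
  have Hdiv : kap * t ^ 2 / (2 * nn) <= kap * INR kb ^ 2 / (2 * nn).
    rewrite /Rdiv; apply: Rmult_le_compat_r; first by apply: Rlt_le; apply: Rinv_0_lt_compat; lra.
    nra.
  have Heq : kap * t ^ 2 / (2 * nn) = kap / 2 * ln nn by rewrite Ht2; field; lra.
  apply: bnd_of_ln; [apply: lt_0_INR; apply/ltP; exact: Hpos | lra | lra].
have Hup : INR (q n (rs + kb)) <= B.
  apply: Hgen; rewrite plus_INR Rabs_pos_eq; [ring | have := pos_INR kb; lra].
have Hkbrs : (kb <= rs)%nat.
  apply: INR_le_nat; have : nn * x0 >= 0.27 * nn by nra.
  rewrite HM in H2; lra.
have Hdown : INR (q n (rs - kb)) <= B.
  apply: Hgen; rewrite -minusE minus_INR; last by apply/leP.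
  have -> : INR rs - INR kb - INR rs = - INR kb by ring.
  rewrite Rabs_Ropp Rabs_pos_eq //; exact: pos_INR.
have Hfar := far_bound (n := n) (rs := rs) (t := t) (Qm := (q n (rs + kb) + q n (rs - kb))%nat).
have Hfar' : (far_count n rs t <= n.+1 * (q n (rs + kb) + q n (rs - kb)))%nat.
  apply: Hfar => r Hr; rewrite /farc.
  case: (Rlt_dec t (Rabs (INR r - INR rs))) => // Hlt _.
  case: (leqP rs r) => Hrr.
  - have Hge : (rs + kb <= r)%nat.
      apply/negPn/negP; rewrite -ltnNge => Hlt2.
      have := nat_le_INR Hlt2; rewrite S_INR plus_INR.
      have := nat_le_INR Hrr.
      rewrite Rabs_pos_eq in Hlt; [lra | have := nat_le_INR Hrr; lra].
    have -> : r = (rs + kb + (r - (rs + kb)))%nat by rewrite subnKC.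
    apply: leq_trans (@mono_up_iter n rs (rs + kb) (r - (rs + kb)) (ltac:(lra) : 1 <= nn) H (leq_addr _ _)) _.
    exact: leq_addr.
  - have Hge : (r + kb <= rs)%nat.
      apply/negPn/negP; rewrite -ltnNge => Hlt2.
      have := nat_le_INR Hlt2; rewrite S_INR plus_INR.
      have := nat_le_INR (ltnW Hrr).
      rewrite -Rabs_Ropp Rabs_pos_eq in Hlt; [lra | have := nat_le_INR (ltnW Hrr); lra].
    have -> : r = (rs - kb - (rs - kb - r))%nat by lia.
    apply: leq_trans (@mono_down_iter n rs (rs - kb) (rs - kb - r) (ltac:(lra) : 1 <= nn) H (leq_subr _ _)) _.
    exact: leq_addl.
have HF := nat_le_INR Hfar'.
have EE : INR (q n (rs + kb) + q n (rs - kb))%nat = INR (q n (rs + kb)) + INR (q n (rs - kb))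
  by rewrite -plusE plus_INR.
rewrite -multE mult_INR EE S_INR -/nn in HF.
apply: Rle_trans HF _.
have -> : (4 * exp 1) * nn * exp (- (5 * sqrt 5 / 2) * ln nn) * INR (q n rs) = 4 * nn * B.
  rewrite /B /kap /s5 exp_plus; ring.
nra.
Qed.

Lemma part3 (rstar : nat -> nat)
  (hmax : forall n r : nat, (q n r <= q n (rstar n))%nat) :
  (forall eps : R, (0 < eps)%R ->
     exists N : nat, forall n : nat, (N <= n)%nat ->
       (INR (far_count n (rstar n) (sqrt (INR n * ln (INR n))))
          <= eps * INR (q n (rstar n)))%R).
Proof.
move=> eps Heps.
have [N2 HN2] := part2 hmax.
have [N3 HN3] := INR_unbounded (4 * exp 1 / eps + 10000).
exists (maxn N2 N3) => n Hn.
have Hn2 : (N2 <= n)%nat by apply: leq_trans Hn; exact: leq_maxl.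
have Hn3 : (N3 <= n)%nat by apply: leq_trans Hn; exact: leq_maxr.
have Hb := HN2 n Hn2.
have Hnn := nat_le_INR Hn3.
set nn := INR n in Hb Hnn *.
have He0 : 0 < 4 * exp 1 / eps by apply: Rdiv_lt_0_compat; [have := exp_pos 1; lra | lra].
have Hn1 : 10000 <= nn by lra.
have HL0 : 0 <= ln nn by exact: ln_nn_pos.
have Hqs : 1 <= INR (q n (rstar n)) by exact: qstar_ge1.
apply: Rle_trans Hb _.
have Hs := s5b.
have Hexp : exp (- (5 * sqrt 5 / 2) * ln nn) <= / (nn * nn).
  have -> : / (nn * nn) = exp (- (2 * ln nn)).
    rewrite exp_Ropp (_ : 2 * ln nn = ln nn + ln nn) ?exp_plus ?exp_ln //; [lra | ring].
  apply: exp_le_mono; rewrite -/s5; nra.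
have Hpos : 0 < exp (- (5 * sqrt 5 / 2) * ln nn) by apply: exp_pos.
have HC : 4 * exp 1 * nn * exp (- (5 * sqrt 5 / 2) * ln nn) <= eps.
  have H1 : 4 * exp 1 * nn * exp (- (5 * sqrt 5 / 2) * ln nn) <= 4 * exp 1 * nn * / (nn * nn).
    apply: Rmult_le_compat_l => //; have := exp_pos 1; nra.
  apply: Rle_trans H1 _.
  have -> : 4 * exp 1 * nn * / (nn * nn) = (4 * exp 1 / eps) * eps / nn by field; lra.
  apply: (Rmult_le_reg_r nn); first lra.
  have -> : 4 * exp 1 / eps * eps / nn * nn = (4 * exp 1 / eps) * eps by field; lra.
  nra.
apply: Rmult_le_compat_r; lra.
Qed.

Theorem mainTheorem7 (rstar : nat -> nat)
  (hmax : forall n r : nat, (q n r <= q n (rstar n))%N) :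
  (* (i) *)
  (forall eps : R, (0 < eps)%R ->
     exists N : nat, forall (n : nat) (r : BinNums.Z), (N <= n)%N ->
       forall c : R,
         (IZR r = INR (rstar n) + c * sqrt (INR n))%R ->
         (- sqrt (ln (INR n)) <= c <= sqrt (ln (INR n)))%R ->
         exists e : R, (Rabs e <= eps)%R /\
           INR (qZ n r) =
             (exp (- (5 * sqrt 5 * c ^ 2) / 2 + e) * INR (q n (rstar n)))%R)
  /\
  (* (ii) *)
  (exists C : R, exists N : nat, forall n : nat, (N <= n)%N ->
     (INR (far_count n (rstar n) (sqrt (INR n * ln (INR n))))
        <= C * INR n * exp (- (5 * sqrt 5 / 2) * ln (INR n))
             * INR (q n (rstar n)))%R)
  /\
  (forall eps : R, (0 < eps)%R ->
     exists N : nat, forall n : nat, (N <= n)%N ->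
       (INR (far_count n (rstar n) (sqrt (INR n * ln (INR n))))
          <= eps * INR (q n (rstar n)))%R).
Proof.
split; first exact: part1 hmax.
split; last exact: part3 hmax.
exists (4 * exp 1); exact: part2 hmax.
Qed.
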